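(* Let $(X,d)$ be an Alexandrov space with curvature bounded below by some $K\in\mathbb{R}$, and let $x_1,x_2,y_1,y_2\in X$ satisfy $$d(x_1,y_1)^2+d(x_2,y_2)^2\le d(x_1,y_2)^2+d(x_2,y_1)^2.$$ Let $\gamma_1,\gamma_2:[0,1]\to X$ be constant-speed minimizing geodesics from $x_1$ to $y_1$ and from $x_2$ to $y_2$, respectively. If $\gamma_1(t_0)=\gamma_2(t_0)$ for some $t_0\in(0,1)$, then $\gamma_1(t)=\gamma_2(t)$ for all $t\in[0,1]$.
   Context: An Alexandrov space with curvature $\geq K$ is a finite-dimensional, complete, locally compact, connected length space in which for every quadruple $(p;a,b,c)$ one has $\tilde\angle_K apb+\tilde\angle_K bpc+\tilde\angle_K cpa\le 2\pi$, where $\tilde\angle_K apb$ denotes the angle at $\bar p$ of the comparison triangle with the same side lengths in the model plane of constant curvature $K$. *)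

(* Defs.v *)
From Stdlib Require Import Reals Lra List.
Open Scope R_scope.

Record is_metric {X : Type} (d : X -> X -> R) : Prop := {
  metric_nonneg : forall x y, 0 <= d x y;
  metric_sep : forall x y, d x y = 0 <-> x = y;
  metric_sym : forall x y, d x y = d y x;
  metric_tri : forall x y z, d x z <= d x y + d y z
}.

Definition ball {X : Type} (d : X -> X -> R) (x : X) (r : R) : X -> Prop :=
  fun y => d x y < r.

Definition is_open {X : Type} (d : X -> X -> R) (U : X -> Prop) : Prop :=
  forall x, U x -> exists r, 0 < r /\ forall y, ball d x r y -> U y.

Definition is_complete {X : Type} (d : X -> X -> R) : Prop :=
  forall u : nat -> X,
    (forall eps, 0 < eps -> exists N, forall m n, (N <= m)%nat -> (N <= n)%nat ->
        d (u m) (u n) < eps) ->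
    exists l, forall eps, 0 < eps -> exists N, forall n, (N <= n)%nat -> d (u n) l < eps.

Definition is_compact {X : Type} (d : X -> X -> R) (Kset : X -> Prop) : Prop :=
  forall (I : Type) (U : I -> X -> Prop),
    (forall i, is_open d (U i)) ->
    (forall x, Kset x -> exists i, U i x) ->
    exists l : list I, forall x, Kset x -> exists i, In i l /\ U i x.

Definition is_locally_compact {X : Type} (d : X -> X -> R) : Prop :=
  forall x, exists N : X -> Prop, is_compact d N /\
    exists r, 0 < r /\ forall y, ball d x r y -> N y.

Definition is_connected {X : Type} (d : X -> X -> R) : Prop :=
  forall U V : X -> Prop, is_open d U -> is_open d V ->
    (forall x, U x \/ V x) -> (forall x, ~ (U x /\ V x)) ->
    (exists x, U x) -> (exists x, V x) -> False.

Definition curve_continuous {X : Type} (d : X -> X -> R) (c : R -> X) : Prop :=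
  forall t, 0 <= t <= 1 -> forall eps, 0 < eps -> exists delta, 0 < delta /\
    forall s, 0 <= s <= 1 -> Rabs (s - t) < delta -> d (c s) (c t) < eps.

Fixpoint poly_length {X : Type} (d : X -> X -> R) (c : R -> X) (p : nat -> R) (n : nat) : R :=
  match n with
  | O => 0
  | S k => poly_length d c p k + d (c (p k)) (c (p (S k)))
  end.

(** length of [c] on [0,1] is at most [L]: every partition sum is <= L
    (the length is the sup of these sums) *)
Definition curve_length_le {X : Type} (d : X -> X -> R) (c : R -> X) (L : R) : Prop :=
  forall (n : nat) (p : nat -> R),
    p O = 0 -> p n = 1 -> (forall i, (i < n)%nat -> p i <= p (S i)) ->
    poly_length d c p n <= L.

(** length space: d(x,y) is the infimum of lengths of curves joining x to y
    (every curve has length >= d(x,y) automatically by the triangle inequality) *)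
Definition is_length_space {X : Type} (d : X -> X -> R) : Prop :=
  forall x y eps, 0 < eps -> exists c : R -> X,
    curve_continuous d c /\ c 0 = x /\ c 1 = y /\ curve_length_le d c (d x y + eps).

(** finite dimension = finite Hausdorff dimension: there is s >= 0 with
    H^s(X) = 0, i.e. for every delta > 0, H^s_delta(X) = 0: for every eps > 0
    there is a countable cover by sets U_i of diameter <= r_i <= delta with
    sum r_i^s <= eps. *)
Definition is_finite_dimensional {X : Type} (d : X -> X -> R) : Prop :=
  exists s, 0 <= s /\
    forall delta eps, 0 < delta -> 0 < eps ->
      exists (U : nat -> X -> Prop) (r : nat -> R),
        (forall x, exists i, U i x) /\
        (forall i, 0 < r i <= delta) /\
        (forall i x y, U i x -> U i y -> d x y <= r i) /\
        (forall N, sum_f_R0 (fun i => Rpower (r i) s) N <= eps).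

(** Angle at p of the comparison triangle with |pa| = a, |pb| = b, |ab| = c. *)
Definition cmp_angle (K a b c : R) : R :=
  if Rlt_dec 0 K then
    let k := sqrt K in
    acos ((cos (k * c) - cos (k * a) * cos (k * b)) / (sin (k * a) * sin (k * b)))
  else if Rlt_dec K 0 then
    let k := sqrt (- K) in
    acos ((cosh (k * a) * cosh (k * b) - cosh (k * c)) / (sinh (k * a) * sinh (k * b)))
  else
    acos ((a ^ 2 + b ^ 2 - c ^ 2) / (2 * a * b)).

(** The comparison triangle (with a, b > 0) exists in the K-plane: always for
    K <= 0, and iff the perimeter is < 2 pi / sqrt K for K > 0. *)
Definition cmp_defined (K a b c : R) : Prop :=
  0 < a /\ 0 < b /\ (0 < K -> a + b + c < 2 * PI / sqrt K).

Definition cmp_angle_at {X : Type} (d : X -> X -> R) (K : R) (p x y : X) : R :=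
  cmp_angle K (d p x) (d p y) (d x y).

Definition cmp_defined_at {X : Type} (d : X -> X -> R) (K : R) (p x y : X) : Prop :=
  cmp_defined K (d p x) (d p y) (d x y).

Definition curv_ge {X : Type} (d : X -> X -> R) (K : R) : Prop :=
  forall p a b c : X,
    cmp_defined_at d K p a b -> cmp_defined_at d K p b c -> cmp_defined_at d K p c a ->
    cmp_angle_at d K p a b + cmp_angle_at d K p b c + cmp_angle_at d K p c a <= 2 * PI.

Definition is_alexandrov {X : Type} (d : X -> X -> R) (K : R) : Prop :=
  is_metric d /\ is_finite_dimensional d /\ is_complete d /\ is_locally_compact d /\
  is_connected d /\ is_length_space d /\ curv_ge d K.

Definition is_cs_geodesic {X : Type} (d : X -> X -> R) (g : R -> X) (x y : X) : Prop :=
  g 0 = x /\ g 1 = y /\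
  forall s t, 0 <= s <= 1 -> 0 <= t <= 1 -> d (g s) (g t) = Rabs (s - t) * d x y.

(* Main.v *)
Require Import Defs.
From Stdlib Require Import Reals Lra.
Open Scope R_scope.

Lemma acos_m1 : acos (-1) = PI.
Proof. unfold acos; destruct (Rle_dec (-1) (-1)); lra. Qed.

Lemma acos_le0 x : acos x <= 0 -> 1 <= x.
Proof.
  intros H. destruct (Rle_dec 1 x) as [h|h]; [exact h|exfalso].
  pose proof PI_RGT_0.
  destruct (Rle_dec x (-1)) as [h2|h2].
  - unfold acos in H. destruct (Rle_dec x (-1)); lra.
  - pose proof (acos_bound_lt x ltac:(lra)). lra.
Qed.

Lemma cosh_plus x y : cosh (x + y) = cosh x * cosh y + sinh x * sinh y.
Proof.
  unfold cosh, sinh. replace (-(x+y)) with (-x + -y) by ring.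
  rewrite !exp_plus. field.
Qed.

Lemma cosh_sinh x : cosh x * cosh x - sinh x * sinh x = 1.
Proof.
  unfold cosh, sinh. assert (exp x * exp (-x) = 1).
  { rewrite <- exp_plus. replace (x + -x) with 0 by ring. apply exp_0. }
  nra.
Qed.

Lemma sinh_pos x : 0 < x -> 0 < sinh x.
Proof. intros. rewrite <- sinh_0. apply sinh_lt; auto. Qed.

Lemma per_bound K k s : 0 < K -> k = sqrt K -> s < 2 * PI / k -> k * s < 2 * PI.
Proof.
  intros HK Hk H. assert (0 < k) by (subst; apply sqrt_lt_R0; auto).
  apply Rmult_lt_compat_l with (r:=k) in H; auto.
  replace (k * (2 * PI / k)) with (2*PI) in H by (field; lra). lra.
Qed.

Lemma angle_pi K a b : 0 < a -> 0 < b -> (0 < K -> a + b + (a + b) < 2 * PI / sqrt K) ->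
  cmp_angle K a b (a + b) = PI.
Proof.
  intros Ha Hb HP. unfold cmp_angle.
  destruct (Rlt_dec 0 K) as [HK|HK].
  - set (k := sqrt K). assert (0 < k) by (apply sqrt_lt_R0; auto).
    pose proof (per_bound K k _ HK eq_refl (HP HK)).
    assert (0 < sin (k*a)) by (apply sin_gt_0; nra).
    assert (0 < sin (k*b)) by (apply sin_gt_0; nra).
    rewrite Rmult_plus_distr_l, cos_plus.
    replace ((cos (k * a) * cos (k * b) - sin (k * a) * sin (k * b) - cos (k * a) * cos (k * b)) /
      (sin (k * a) * sin (k * b))) with (-1) by (field; nra).
    apply acos_m1.
  - destruct (Rlt_dec K 0) as [HK'|HK'].
    + set (k := sqrt (-K)). assert (0 < k) by (apply sqrt_lt_R0; lra).
      assert (0 < sinh (k*a)) by (apply sinh_pos; nra).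
      assert (0 < sinh (k*b)) by (apply sinh_pos; nra).
      rewrite Rmult_plus_distr_l, cosh_plus.
      match goal with |- acos ?e = _ => replace e with (-1) by (field; nra) end.
      apply acos_m1.
    + match goal with |- acos ?e = _ => replace e with (-1) by (field; lra) end.
      apply acos_m1.
Qed.

Lemma angle_zero K r e : 0 < r -> 0 <= e -> (0 < K -> r + r + e < 2 * PI / sqrt K) ->
  cmp_angle K r r e <= 0 -> e = 0.
Proof.
  intros Hr He HP H. unfold cmp_angle in H.
  destruct (Rlt_dec 0 K) as [HK|HK].
  - set (k := sqrt K) in *. assert (0 < k) by (apply sqrt_lt_R0; auto).
    pose proof (per_bound K k _ HK eq_refl (HP HK)).
    assert (0 < sin (k*r)) by (apply sin_gt_0; nra).
    apply acos_le0 in H.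
    set (D := sin (k * r) * sin (k * r)) in *.
    assert (0 < D) by (unfold D; nra).
    set (N := cos (k * e) - cos (k * r) * cos (k * r)) in *.
    assert (D <= N).
    { replace N with (N / D * D) by (field; lra). nra. }
    pose proof (sin2_cos2 (k*r)). unfold Rsqr in *.
    assert (1 <= cos (k*e)) by (unfold N, D in *; nra).
    destruct (Req_dec e 0) as [E|E]; auto. exfalso.
    assert (0 < k*e) by (apply Rmult_lt_0_compat; lra).
    assert (0 < sin (k*e/2)) by (apply sin_gt_0; nra).
    pose proof (cos_2a_sin (k*e/2)).
    replace (2 * (k*e/2)) with (k*e) in * by field. nra.
  - destruct (Rlt_dec K 0) as [HK'|HK'].
    + set (k := sqrt (-K)) in *. assert (0 < k) by (apply sqrt_lt_R0; lra).
      assert (0 < sinh (k*r)) by (apply sinh_pos; nra).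
      apply acos_le0 in H.
      set (D := sinh (k * r) * sinh (k * r)) in *.
      assert (0 < D) by (unfold D; nra).
      set (N := cosh (k * r) * cosh (k * r) - cosh (k * e)) in *.
      assert (D <= N).
      { replace N with (N / D * D) by (field; lra). nra. }
      pose proof (cosh_sinh (k*r)).
      assert (cosh (k*e) <= 1) by (unfold N, D in *; nra).
      destruct (Req_dec e 0) as [E|E]; auto. exfalso.
      assert (0 < k*e) by (apply Rmult_lt_0_compat; lra).
      pose proof (exp_increasing 0 (k*e) ltac:(lra)). rewrite exp_0 in *.
      assert (exp (k*e) * exp (-(k*e)) = 1).
      { rewrite <- exp_plus. replace (k*e + -(k*e)) with 0 by ring. apply exp_0. }
      pose proof (exp_pos (-(k*e))).
      unfold cosh in *. nra.
    + apply acos_le0 in H.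
      assert (0 < 2 * r * r) by nra.
      assert (2*r*r <= r ^ 2 + r ^ 2 - e ^ 2).
      { replace (r ^ 2 + r ^ 2 - e ^ 2) with ((r ^ 2 + r ^ 2 - e ^ 2)/(2*r*r) * (2*r*r)) by (field; lra). nra. }
      nra.
Qed.

Lemma core {X : Type} (d : X -> X -> R) K (Hm : is_metric d) (Hc : curv_ge d K)
  z u b c p r : d z u = p -> 0 < p -> d z b = r -> d z c = r -> 0 < r ->
  d u b = p + r -> d u c = p + r ->
  (0 < K -> 4 * r < 2 * PI / sqrt K) -> p <= r -> b = c.
Proof.
  intros Hu Hp Hb Hcc Hr Hub Huc HK Hpr.
  assert (Hbc : d b c <= r + r).
  { pose proof (metric_tri d Hm b z c). rewrite (metric_sym d Hm b z) in H. lra. }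
  pose proof (metric_nonneg d Hm b c).
  specialize (Hc z u b c).
  unfold cmp_defined_at, cmp_angle_at, cmp_defined in Hc.
  rewrite Hu, Hb, Hcc, Hub, (metric_sym d Hm c u), Huc in Hc.
  assert (E1 : cmp_angle K p r (p + r) = PI).
  { apply angle_pi; auto. intro h; specialize (HK h); lra. }
  assert (E2 : cmp_angle K r p (p + r) = PI).
  { replace (p + r) with (r + p) by ring. apply angle_pi; auto. intro h; specialize (HK h); lra. }
  rewrite E1, E2 in Hc.
  assert (d b c = 0).
  { apply (angle_zero K r (d b c)); auto.
    - intro h; specialize (HK h); lra.
    - assert (PI + cmp_angle K r r (d b c) + PI <= 2 * PI).
      { apply Hc; repeat split; auto; intro h; specialize (HK h); lra. }
      lra. }
  apply (metric_sep d Hm); auto.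
Qed.

Lemma geo_d {X : Type} (d : X -> X -> R) g x y (H : is_cs_geodesic d g x y) s t :
  0 <= s <= 1 -> 0 <= t <= 1 -> s <= t -> d (g s) (g t) = (t - s) * d x y.
Proof.
  intros Hs Ht Hst. destruct H as [_ [_ H]]. rewrite H by auto.
  rewrite Rabs_minus_sym, Rabs_pos_eq; lra.
Qed.

Theorem lemma3p2 (X : Type) (d : X -> X -> R) (K : R)
  (HX : is_alexandrov d K)
  (x1 x2 y1 y2 : X)
  (Hd : d x1 y1 ^ 2 + d x2 y2 ^ 2 <= d x1 y2 ^ 2 + d x2 y1 ^ 2)
  (g1 g2 : R -> X)
  (Hg1 : is_cs_geodesic d g1 x1 y1) (Hg2 : is_cs_geodesic d g2 x2 y2)
  (t0 : R) (Ht0 : 0 < t0 < 1) (Hmeet : g1 t0 = g2 t0) :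
  forall t, 0 <= t <= 1 -> g1 t = g2 t.
Proof.
  destruct HX as (Hm & _ & _ & _ & _ & _ & Hc).
  pose proof Hg1 as G1. pose proof Hg2 as G2.
  destruct Hg1 as [g10 [g11 _]]. destruct Hg2 as [g20 [g21 _]].
  pose proof (metric_nonneg d Hm x1 y1) as Ha0.
  pose proof (metric_nonneg d Hm x2 y2) as Hb0.
  pose proof (metric_nonneg d Hm x1 y2) as Hc0.
  pose proof (metric_nonneg d Hm x2 y1) as Hd0.
  pose proof (geo_d d g1 x1 y1 G1 0 t0 ltac:(lra) ltac:(lra) ltac:(lra)) as A1.
  pose proof (geo_d d g1 x1 y1 G1 t0 1 ltac:(lra) ltac:(lra) ltac:(lra)) as A2.
  pose proof (geo_d d g2 x2 y2 G2 0 t0 ltac:(lra) ltac:(lra) ltac:(lra)) as B1.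
  pose proof (geo_d d g2 x2 y2 G2 t0 1 ltac:(lra) ltac:(lra) ltac:(lra)) as B2.
  rewrite g10 in A1. rewrite g11 in A2. rewrite g20 in B1. rewrite g21 in B2.
  rewrite <- Hmeet in B1, B2.
  pose proof (metric_tri d Hm x1 (g1 t0) y2) as T1.
  pose proof (metric_tri d Hm x2 (g1 t0) y1) as T2.
  set (a := d x1 y1) in *. set (b := d x2 y2) in *.
  set (D1 := d x1 y2) in *. set (D2 := d x2 y1) in *.
  assert (P1 : D1 ^ 2 <= (t0 * a + (1 - t0) * b) ^ 2) by nra.
  assert (P2 : D2 ^ 2 <= (t0 * b + (1 - t0) * a) ^ 2) by nra.
  assert (Hab : b = a).
  { assert ((t0 * a + (1 - t0) * b) ^ 2 + (t0 * b + (1 - t0) * a) ^ 2 =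
      a ^ 2 + b ^ 2 - 2 * (t0 * (1 - t0) * (a - b) ^ 2)) by ring.
    assert (t0 * (1 - t0) * (a - b) ^ 2 <= 0) by lra.
    assert (0 < t0 * (1 - t0)) by (apply Rmult_lt_0_compat; lra).
    assert ((a - b) ^ 2 <= 0).
    { destruct (Rle_dec ((a - b) ^ 2) 0); auto. nra. }
    nra. }
  rewrite Hab in *.
  assert (HD1 : D1 = a) by nra.
  assert (HD2 : D2 = a) by nra.
  clear P1 P2 T1 T2 A1 A2 B1 B2.
  destruct (Req_dec a 0) as [a0|a0].
  { intros t Ht. destruct G1 as [_ [_ G1']]. destruct G2 as [_ [_ G2']].
    assert (E1 : d (g1 t) (g1 t0) = 0) by (rewrite G1' by lra; fold a; rewrite a0; ring).
    assert (E2 : d (g2 t) (g2 t0) = 0) by (rewrite G2' by lra; fold b; rewrite Hab, a0; ring).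
    apply (metric_sep d Hm) in E1. apply (metric_sep d Hm) in E2. congruence. }
  assert (apos : 0 < a) by lra.
  assert (M : forall t1 s t, 0 <= s -> s <= t1 -> t1 <= t -> t <= 1 -> g1 t1 = g2 t1 ->
     d (g1 s) (g2 t) = (t - s) * a /\ d (g2 s) (g1 t) = (t - s) * a).
  { intros t1 s t h1 h2 h3 h4 hm. split.
    - pose proof (metric_tri d Hm (g1 s) (g1 t1) (g2 t)).
      rewrite (geo_d d g1 x1 y1 G1 s t1) in H by lra.
      rewrite hm, (geo_d d g2 x2 y2 G2 t1 t) in H by lra. fold a b in H. rewrite Hab in H.
      pose proof (metric_tri d Hm x1 (g1 s) y2).
      pose proof (metric_tri d Hm (g1 s) (g2 t) y2).
      pose proof (geo_d d g1 x1 y1 G1 0 s ltac:(lra) ltac:(lra) ltac:(lra)) as e1.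
      pose proof (geo_d d g2 x2 y2 G2 t 1 ltac:(lra) ltac:(lra) ltac:(lra)) as e2.
      rewrite g10 in e1. rewrite g21 in e2. fold a b in e1, e2. rewrite Hab in e2.
      fold D1 in H0. lra.
    - pose proof (metric_tri d Hm (g2 s) (g2 t1) (g1 t)).
      rewrite (geo_d d g2 x2 y2 G2 s t1) in H by lra.
      rewrite <- hm, (geo_d d g1 x1 y1 G1 t1 t) in H by lra. fold a b in H. rewrite Hab in H.
      pose proof (metric_tri d Hm x2 (g2 s) y1).
      pose proof (metric_tri d Hm (g2 s) (g1 t) y1).
      pose proof (geo_d d g2 x2 y2 G2 0 s ltac:(lra) ltac:(lra) ltac:(lra)) as e1.
      pose proof (geo_d d g1 x1 y1 G1 t 1 ltac:(lra) ltac:(lra) ltac:(lra)) as e2.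
      rewrite g20 in e1. rewrite g11 in e2. fold a b in e1, e2. rewrite Hab in e1.
      fold D2 in H0. lra. }
  assert (Hdel : exists del, 0 < del /\ forall h, 0 <= h <= del -> 0 < K -> 4 * (h * a) < 2 * PI / sqrt K).
  { destruct (Rlt_dec 0 K) as [HK|HK].
    - set (k := sqrt K). assert (0 < k) by (apply sqrt_lt_R0; auto).
      pose proof PI_RGT_0.
      exists (PI / (4 * a * k)). split.
      + apply Rdiv_lt_0_compat; nra.
      + intros h Hh _. assert (4 * (PI / (4 * a * k) * a) = PI / k) by (field; lra).
        assert (2 * PI / k = 2 * (PI / k)) by (field; lra).
        assert (0 < PI / k) by (apply Rdiv_lt_0_compat; lra). nra.
    - exists 1. split; [lra|]. intros; lra. }
  destruct Hdel as [del [Hdel0 Hdel]].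
  assert (Step : forall t1 t, 0 < t1 < 1 -> g1 t1 = g2 t1 -> 0 <= t <= 1 ->
            Rabs (t - t1) <= del -> g1 t = g2 t).
  { intros t1 t Ht1 hm Ht Hab'.
    destruct (Rtotal_order t1 t) as [lt|[eq|gt]].
    - rewrite Rabs_pos_eq in Hab' by lra.
      set (eps := Rmin t1 (t - t1)).
      assert (0 < eps /\ eps <= t1 /\ eps <= t - t1) as [e1 [e2 e3]]
        by (unfold eps, Rmin; destruct (Rle_dec t1 (t - t1)); lra).
      apply (core d K Hm Hc (g1 t1) (g1 (t1 - eps)) (g1 t) (g2 t) (eps * a) ((t - t1) * a)).
      + rewrite (metric_sym d Hm), (geo_d d g1 x1 y1 G1) by lra. fold a. ring.
      + nra.
      + rewrite (geo_d d g1 x1 y1 G1) by lra. reflexivity.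
      + rewrite hm, (geo_d d g2 x2 y2 G2) by lra. fold b. rewrite Hab. reflexivity.
      + nra.
      + rewrite (geo_d d g1 x1 y1 G1) by lra. fold a. ring.
      + rewrite (proj1 (M t1 (t1 - eps) t ltac:(lra) ltac:(lra) ltac:(lra) ltac:(lra) hm)). ring.
      + intro hK. apply Hdel; auto; lra.
      + nra.
    - subst; auto.
    - rewrite Rabs_left in Hab' by lra.
      set (eps := Rmin (1 - t1) (t1 - t)).
      assert (0 < eps /\ eps <= 1 - t1 /\ eps <= t1 - t) as [e1 [e2 e3]]
        by (unfold eps, Rmin; destruct (Rle_dec (1 - t1) (t1 - t)); lra).
      apply (core d K Hm Hc (g1 t1) (g1 (t1 + eps)) (g1 t) (g2 t) (eps * a) ((t1 - t) * a)).
      + rewrite (geo_d d g1 x1 y1 G1) by lra. fold a. ring.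
      + nra.
      + rewrite (metric_sym d Hm), (geo_d d g1 x1 y1 G1) by lra. reflexivity.
      + rewrite hm, (metric_sym d Hm), (geo_d d g2 x2 y2 G2) by lra. fold b. rewrite Hab. reflexivity.
      + nra.
      + rewrite (metric_sym d Hm), (geo_d d g1 x1 y1 G1) by lra. fold a. ring.
      + rewrite (metric_sym d Hm).
        rewrite (proj2 (M t1 t (t1 + eps) ltac:(lra) ltac:(lra) ltac:(lra) ltac:(lra) hm)). ring.
      + intro hK. apply Hdel; auto; lra.
      + nra. }
  assert (Ind : forall n : nat, forall t, 0 <= t <= 1 -> Rabs (t - t0) <= INR n * del -> g1 t = g2 t).
  { induction n as [|n IH]; intros t Ht Hr.
    - simpl in Hr. assert (t = t0) by (unfold Rabs in Hr; destruct (Rcase_abs (t - t0)); lra).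
      subst; auto.
    - rewrite S_INR in Hr.
      destruct (Rle_dec (Rabs (t - t0)) del) as [hs|hs].
      { apply (Step t0 t); auto. }
      destruct (Rle_dec t0 t) as [le|lt].
      + rewrite Rabs_pos_eq in Hr, hs by lra.
        apply (Step (t - del) t); try lra.
        * apply IH; try lra. rewrite Rabs_pos_eq; lra.
        * rewrite Rabs_pos_eq; lra.
      + rewrite Rabs_left in Hr, hs by lra.
        apply (Step (t + del) t); try lra.
        * apply IH; try lra. rewrite Rabs_left; lra.
        * rewrite Rabs_left; lra. }
  destruct (INR_archimed del 1 Hdel0) as [n Hn].
  intros t Ht. apply (Ind n t Ht).
  unfold Rabs; destruct (Rcase_abs (t - t0)); lra.
Qed.
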